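(* Let $p\ge5$ be prime. Then the following graph $G_p$ has no induced regular subgraph of order $p$. (a) If $p=12t+1$, then $G_p=3t\,C_9[K_{6t}]$, which has $\frac98(p-1)^2$ vertices. (b) If $p=12t+5$, then $G_p=(3t+1)\,C_9[K_{6t+2}]$, which has $\frac98(p-1)^2$ vertices. (c) If $p=12t+7$, then $G_p=C_5[K_{6t+3}]\sqcup(3t+1)\,C_9[K_{6t+3}]$, which has $\frac18(p-1)(9p-7)$ vertices. (d) If $p=12t+11$, then $G_p=C_4[K_{6t+5}]\sqcup(3t+2)\,C_9[K_{6t+5}]$, which has $\frac18(p-1)(9p-11)$ vertices. (Here $t\ge0$ is an integer.)
   Context: Graphs are finite and simple; the order of a graph is its number of vertices. $C_r$ is the cycle on $r$ vertices and $K_s$ the complete graph on $s$ vertices. The lexicographic product $G[H]$ has vertex set $V(G)\times V(H)$, with $(a,b)$ adjacent to $(a',b')$ iff $a$ is adjacent to $a'$ in $G$, or $a=a'$ and $b$ is adjacent to $b'$ in $H$. For a graph $G$ and integer $m\ge0$, $mG$ denotes the disjoint union of $m$ copies of $G$, and $\sqcup$ denotes disjoint union. An induced regular subgraph is an induced subgraph in which all vertices have the same degree. *)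

(* Defs.v *)
From mathcomp Require Import all_boot.

(* A graph is given by an adjacency relation on a finite vertex type.
   All graphs built below are simple (symmetric and irreflexive). *)

Definition cycle_adj (r : nat) : rel 'I_r :=
  fun a b => (val b == (val a).+1 %% r) || (val a == (val b).+1 %% r).

Definition complete_adj (s : nat) : rel 'I_s := fun a b => a != b.


Definition lex_adj {A B : finType} (eG : rel A) (eH : rel B) : rel (A * B) :=
  fun x y => eG x.1 y.1 || ((x.1 == y.1) && eH x.2 y.2).

Definition copies_adj {A : finType} (m : nat) (e : rel A) : rel ('I_m * A) :=
  fun x y => (x.1 == y.1) && e x.2 y.2.


Definition sum_adj {A B : finType} (e1 : rel A) (e2 : rel B) : rel (A + B) :=
  fun x y => match x, y with
             | inl a, inl a' => e1 a a'
             | inr b, inr b' => e2 b b'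
             | _, _ => false
             end.

Definition CK (r s : nat) : rel ('I_r * 'I_s) := lex_adj (cycle_adj r) (complete_adj s).

Definition induced_regular {V : finType} (e : rel V) (S : {set V}) : Prop :=
  exists d : nat, forall x, x \in S -> #|[set y in S | e x y]| = d.

Definition has_induced_regular_of_order {V : finType} (e : rel V) (k : nat) : Prop :=
  exists S : {set V}, #|S| = k /\ induced_regular e S.

(* Main.v *)
Require Import Defs.
From mathcomp Require Import all_boot zify.
Set Implicit Arguments. Unset Strict Implicit. Unset Printing Implicit Defensive.

Lemma modS_eq r y : y < r -> y.+1 %% r = if y.+1 == r then 0 else y.+1.
Proof.
move=> yr; case: eqP => [->|ne]; first by rewrite modnn.
by rewrite modn_small //; lia.
Qed.

Lemma modP_eq r k : k < r -> (k + r - 1) %% r = if k == 0 then r - 1 else k - 1.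
Proof.
move=> kr; case: eqP => [->|ne]; first by rewrite modn_small //; lia.
have -> : k + r - 1 = (k - 1) + r by lia.
by rewrite modnDr modn_small //; lia.
Qed.

Lemma mod_prev r y k : y < r -> k < r ->
  (k == y.+1 %% r) = (y == (k + r - 1) %% r).
Proof.
move=> yr kr; rewrite modS_eq // modP_eq //.
do 2 case: ifP => /eqP ?; apply/eqP/eqP; lia.
Qed.

Definition blk r s (S : {set 'I_r * 'I_s}) (k : nat) : {set 'I_r * 'I_s} :=
  [set y in S | val y.1 == k].

Lemma blk_disj r s (S : {set 'I_r * 'I_s}) a b : a != b -> blk S a :&: blk S b = set0.
Proof.
move=> ab; apply/setP => y; rewrite !inE.
apply/negP => /andP[/andP[_ /eqP e1] /andP[_ /eqP e2]].
by move: ab; rewrite -e1 -e2 eqxx.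
Qed.

Lemma comp_eq r s (S : {set 'I_r * 'I_s}) d :
  2 < r ->
  (forall x, x \in S -> #|[set y in S | CK r s x y]| = d) ->
  forall k kp kn, k < r -> kp = (k + r - 1) %% r -> kn = k.+1 %% r -> 0 < #|blk S k| ->
    #|blk S kp| + #|blk S k| + #|blk S kn| = d.+1.
Proof.
move=> r3 reg k kp kn kr -> -> /card_gt0P [x xB].
have xS : x \in S by move: xB; rewrite inE => /andP[].
have xk : val x.1 = k by move: xB; rewrite inE => /andP[_ /eqP].
rewrite -(reg x xS).
have -> : [set y in S | CK r s x y] =
   blk S (k.+1 %% r) :|: blk S ((k + r - 1) %% r) :|: (blk S k :\ x).
  apply/setP => [[i' j']]; rewrite !inE /CK /lex_adj /cycle_adj /complete_adj /=.
  rewrite xk (mod_prev (y:=i') (k:=k)) //.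
  case: ((i', j') \in S); rewrite ?andbF //=.
  case: x xk {xB xS} => i j /= xk.
  rewrite xpair_eqE.
  have -> : (i' == i) = (nat_of_ord i' == k) by rewrite -xk.
  have -> : (i == i') = (nat_of_ord i' == k) by rewrite -xk eq_sym.
  by rewrite [j' == j]eq_sym; case: (nat_of_ord i' == k); rewrite /= ?orbF ?andbT.
have dk1 : k.+1 %% r != (k + r - 1) %% r.
  rewrite modS_eq // modP_eq //; do 2 case: ifP => /eqP ?; apply/eqP; lia.
have dk2 : k.+1 %% r != k.
  rewrite modS_eq //; case: ifP => /eqP ?; apply/eqP; lia.
have dk3 : (k + r - 1) %% r != k.
  rewrite modP_eq //; case: ifP => /eqP ?; apply/eqP; lia.
rewrite (cardsU (blk S _ :|: blk S _) (blk S k :\ x)) (cardsU (blk S _) (blk S _)) (blk_disj S dk1) cards0 subn0.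
have -> : (blk S (k.+1 %% r) :|: blk S ((k + r - 1) %% r)) :&: (blk S k :\ x) = set0.
  apply/setP => y; rewrite !inE.
  case: (y \in S); rewrite ?andbF //=.
  case: (val y.1 =P k) => [->|]; last by rewrite !andbF.
  by rewrite eq_sym (negbTE dk2) eq_sym (negbTE dk3).
rewrite cards0 subn0 (cardsD1 x (blk S k)) xB; lia.
Qed.

Lemma card_ind (T : finType) (A : {set T}) : #|A| = \sum_(x : T) (x \in A : nat).
Proof. by rewrite -sum1_card big_mkcond; apply: eq_bigr => x _; case: (x \in A). Qed.

Definition slice (I A : finType) (S : {set I * A}) (u : I) : {set A} := [set w | (u, w) \in S].
Lemma card_fst (I A : finType) (S : {set I * A}) :
  #|S| = \sum_(u : I) #|slice S u|.
Proof.
rewrite card_ind.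
transitivity (\sum_(u : I) \sum_(w : A) ((u, w) \in S : nat)); last first.
  by apply: eq_bigr => u _; rewrite card_ind; apply: eq_bigr => w _; rewrite /slice inE.
by rewrite pair_big /=; apply: eq_bigr => -[].
Qed.

Definition lslice (A B : finType) (S : {set A + B}) : {set A} := [set a | inl a \in S].
Definition rslice (A B : finType) (S : {set A + B}) : {set B} := [set b | inr b \in S].
Lemma card_sum2 (A B : finType) (S : {set A + B}) :
  #|S| = #|lslice S| + #|rslice S|.
Proof.
rewrite card_ind big_sumType !card_ind /=; congr (_ + _); apply: eq_bigr => ? _; by rewrite /lslice /rslice inE.
Qed.

Lemma copies_reg m (A : finType) (e : rel A) (S : {set 'I_m * A}) d :
  (forall x, x \in S -> #|[set y in S | copies_adj m e x y]| = d) ->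
  forall u v, v \in slice S u -> #|[set w in slice S u | e v w]| = d.
Proof.
move=> reg u v vS; rewrite -(reg (u, v)); last by move: vS; rewrite inE.
have inj : injective (pair u : A -> 'I_m * A) by move=> a b [].
rewrite -(card_imset _ inj).
- apply: eq_card => -[u' w]; rewrite !inE /copies_adj /=.
  apply/imsetP/idP.
  + by case=> w'; rewrite !inE => /andP[h1 h2] [-> ->]; rewrite h1 eqxx h2.
  + case/and3P => h1 /eqP ee h2; subst u'; exists w => //; by rewrite !inE h1 h2.
Qed.

Lemma suml_reg (A B : finType) (e1 : rel A) (e2 : rel B) (S : {set A + B}) d :
  (forall x, x \in S -> #|[set y in S | sum_adj e1 e2 x y]| = d) ->
  forall v, v \in lslice S -> #|[set w in lslice S | e1 v w]| = d.
Proof.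
move=> reg v vS; rewrite -(reg (inl v)); last by move: vS; rewrite inE.
rewrite -(card_imset _ (fun a b (h : (inl a : A + B) = inl b) => ltac:(by case: h))).
apply: eq_card => -[a|b]; rewrite !inE /=.
- apply/imsetP/idP.
  + by case=> w'; rewrite !inE => /andP[h1 h2] [->]; rewrite h1 h2.
  + case/andP => h1 h2; exists a => //; by rewrite !inE h1 h2.
- by rewrite andbF; apply/negP => /imsetP [w' _].
Qed.

Lemma sumr_reg (A B : finType) (e1 : rel A) (e2 : rel B) (S : {set A + B}) d :
  (forall x, x \in S -> #|[set y in S | sum_adj e1 e2 x y]| = d) ->
  forall v, v \in rslice S -> #|[set w in rslice S | e2 v w]| = d.
Proof.
move=> reg v vS; rewrite -(reg (inr v)); last by move: vS; rewrite inE.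
rewrite -(card_imset _ (fun a b (h : (inr a : A + B) = inr b) => ltac:(by case: h))).
apply: eq_card => -[a|b]; rewrite !inE /=.
- by rewrite andbF; apply/negP => /imsetP [w' _].
- apply/imsetP/idP.
  + by case=> w'; rewrite !inE => /andP[h1 h2] [->]; rewrite h1 h2.
  + case/andP => h1 h2; exists b => //; by rewrite !inE h1 h2.
Qed.

Lemma blk_slice r s (S : {set 'I_r * 'I_s}) (i : 'I_r) : #|blk S i| = #|slice S i|.
Proof.
have inj : injective (pair i : 'I_s -> 'I_r * 'I_s) by move=> a b [].
rewrite -(card_imset _ inj); apply: eq_card => -[i' j]; rewrite !inE.
apply/andP/imsetP.
- case=> h /eqP e; have ee : i' = i by apply: val_inj.
  subst i'; exists j => //; by rewrite inE.
- by case=> w; rewrite inE => h [-> ->]; rewrite h eqxx.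
Qed.

Lemma blk_sum r s (S : {set 'I_r * 'I_s}) : #|S| = \sum_(k < r) #|blk S k|.
Proof. by rewrite card_fst; apply: eq_bigr => k _; rewrite blk_slice. Qed.

Lemma blk_le r s (S : {set 'I_r * 'I_s}) k : k < r -> #|blk S k| <= s.
Proof.
move=> kr; rewrite (blk_slice S (Ordinal kr)).
by rewrite -[X in _ <= X](card_ord s) max_card.
Qed.

Lemma sum9 (F : nat -> nat) : \sum_(k < 9) F k = F 0 + F 1 + F 2 + F 3 + F 4 + F 5 + F 6 + F 7 + F 8.
Proof. by rewrite !big_ord_recr big_ord0 /=. Qed.
Lemma sum5 (F : nat -> nat) : \sum_(k < 5) F k = F 0 + F 1 + F 2 + F 3 + F 4.
Proof. by rewrite !big_ord_recr big_ord0 /=. Qed.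
Lemma sum4 (F : nat -> nat) : \sum_(k < 4) F k = F 0 + F 1 + F 2 + F 3.
Proof. by rewrite !big_ord_recr big_ord0 /=. Qed.

Lemma c9 (b0 b1 b2 b3 b4 b5 b6 b7 b8 s D : nat) :
  0 < D -> b0 <= s -> b1 <= s -> b2 <= s -> b3 <= s -> b4 <= s -> b5 <= s -> b6 <= s -> b7 <= s -> b8 <= s ->
  (0 < b0 -> b8 + b0 + b1 = D) ->
  (0 < b1 -> b0 + b1 + b2 = D) ->
  (0 < b2 -> b1 + b2 + b3 = D) ->
  (0 < b3 -> b2 + b3 + b4 = D) ->
  (0 < b4 -> b3 + b4 + b5 = D) ->
  (0 < b5 -> b4 + b5 + b6 = D) ->
  (0 < b6 -> b5 + b6 + b7 = D) ->
  (0 < b7 -> b6 + b7 + b8 = D) ->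
  (0 < b8 -> b7 + b8 + b0 = D) ->
  b0 + b1 + b2 + b3 + b4 + b5 + b6 + b7 + b8 <= 4 * D /\ ((b0 + b1 + b2 + b3 + b4 + b5 + b6 + b7 + b8) = 0 \/ ((b0 + b1 + b2 + b3 + b4 + b5 + b6 + b7 + b8) = D /\ D <= 2 * s) \/ (b0 + b1 + b2 + b3 + b4 + b5 + b6 + b7 + b8) = 2 * D \/ (b0 + b1 + b2 + b3 + b4 + b5 + b6 + b7 + b8) = 3 * D \/ (b0 + b1 + b2 + b3 + b4 + b5 + b6 + b7 + b8) = 4 * D).
Proof.
move=> D0 s0 s1 s2 s3 s4 s5 s6 s7 s8 h0 h1 h2 h3 h4 h5 h6 h7 h8.
case: (posnP b0) => [z0 {h0}|/h0 {}h0];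
case: (posnP b1) => [z1 {h1}|/h1 {}h1];
case: (posnP b2) => [z2 {h2}|/h2 {}h2];
case: (posnP b3) => [z3 {h3}|/h3 {}h3];
case: (posnP b4) => [z4 {h4}|/h4 {}h4];
case: (posnP b5) => [z5 {h5}|/h5 {}h5];
case: (posnP b6) => [z6 {h6}|/h6 {}h6];
case: (posnP b7) => [z7 {h7}|/h7 {}h7];
case: (posnP b8) => [z8 {h8}|/h8 {}h8];
(split; [lia|]);
first [ left; lia | right; left; split; lia | do 2 right; left; lia | do 3 right; left; lia | do 4 right; lia | exfalso; lia].
Qed.

Lemma c5 (b0 b1 b2 b3 b4 s D : nat) :
  0 < D -> b0 <= s -> b1 <= s -> b2 <= s -> b3 <= s -> b4 <= s ->
  (0 < b0 -> b4 + b0 + b1 = D) ->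
  (0 < b1 -> b0 + b1 + b2 = D) ->
  (0 < b2 -> b1 + b2 + b3 = D) ->
  (0 < b3 -> b2 + b3 + b4 = D) ->
  (0 < b4 -> b3 + b4 + b0 = D) ->
  (b0 + b1 + b2 + b3 + b4 <= 2 * D /\ (b0 + b1 + b2 + b3 + b4 = 0 \/ (b0 + b1 + b2 + b3 + b4 = D /\ D <= 2 * s) \/ b0 + b1 + b2 + b3 + b4 = 2 * D))
  \/ 3 * (b0 + b1 + b2 + b3 + b4) = 5 * D.
Proof.
move=> D0 s0 s1 s2 s3 s4 h0 h1 h2 h3 h4.
case: (posnP b0) => [z0 {h0}|/h0 {}h0];
case: (posnP b1) => [z1 {h1}|/h1 {}h1];
case: (posnP b2) => [z2 {h2}|/h2 {}h2];
case: (posnP b3) => [z3 {h3}|/h3 {}h3];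
case: (posnP b4) => [z4 {h4}|/h4 {}h4];
first [ right; lia | left; split; [lia|]; first [ left; lia | right; left; split; lia | do 2 right; lia]].
Qed.
Lemma c4 (b0 b1 b2 b3 s D : nat) :
  0 < D -> b0 <= s -> b1 <= s -> b2 <= s -> b3 <= s ->
  (0 < b0 -> b3 + b0 + b1 = D) ->
  (0 < b1 -> b0 + b1 + b2 = D) ->
  (0 < b2 -> b1 + b2 + b3 = D) ->
  (0 < b3 -> b2 + b3 + b0 = D) ->
  (b0 + b1 + b2 + b3 <= 2 * D /\ (b0 + b1 + b2 + b3 = 0 \/ (b0 + b1 + b2 + b3 = D /\ D <= 2 * s) \/ b0 + b1 + b2 + b3 = 2 * D))
  \/ 3 * (b0 + b1 + b2 + b3) = 4 * D.
Proof.
move=> D0 s0 s1 s2 s3 h0 h1 h2 h3.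
case: (posnP b0) => [z0 {h0}|/h0 {}h0];
case: (posnP b1) => [z1 {h1}|/h1 {}h1];
case: (posnP b2) => [z2 {h2}|/h2 {}h2];
case: (posnP b3) => [z3 {h3}|/h3 {}h3];
first [ right; lia | left; split; [lia|]; first [ left; lia | right; left; split; lia | do 2 right; lia]].
Qed.

Lemma comp9 s (S : {set 'I_9 * 'I_s}) d :
  (forall x, x \in S -> #|[set y in S | CK 9 s x y]| = d) ->
  #|S| <= 4 * d.+1 /\ (#|S| = 0 \/ (#|S| = d.+1 /\ d.+1 <= 2 * s) \/ #|S| = 2 * d.+1 \/ #|S| = 3 * d.+1 \/ #|S| = 4 * d.+1).
Proof.
move=> reg; rewrite blk_sum (sum9 (fun k => #|blk S k|)).
have E := comp_eq (S:=S) isT reg.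
apply: c9 => //; try (apply: blk_le; done).
- exact: (E 0 8 1).
- exact: (E 1 0 2).
- exact: (E 2 1 3).
- exact: (E 3 2 4).
- exact: (E 4 3 5).
- exact: (E 5 4 6).
- exact: (E 6 5 7).
- exact: (E 7 6 8).
- exact: (E 8 7 0).
Qed.

Lemma comp5 s (S : {set 'I_5 * 'I_s}) d :
  (forall x, x \in S -> #|[set y in S | CK 5 s x y]| = d) ->
  (#|S| <= 2 * d.+1 /\ (#|S| = 0 \/ (#|S| = d.+1 /\ d.+1 <= 2 * s) \/ #|S| = 2 * d.+1))
  \/ 3 * #|S| = 5 * d.+1.
Proof.
move=> reg; rewrite blk_sum (sum5 (fun k => #|blk S k|)).
have E := comp_eq (S:=S) isT reg.
apply: c5 => //; try (apply: blk_le; done).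
- exact: (E 0 4 1).
- exact: (E 1 0 2).
- exact: (E 2 1 3).
- exact: (E 3 2 4).
- exact: (E 4 3 0).
Qed.

Lemma comp4 s (S : {set 'I_4 * 'I_s}) d :
  (forall x, x \in S -> #|[set y in S | CK 4 s x y]| = d) ->
  (#|S| <= 2 * d.+1 /\ (#|S| = 0 \/ (#|S| = d.+1 /\ d.+1 <= 2 * s) \/ #|S| = 2 * d.+1))
  \/ 3 * #|S| = 4 * d.+1.
Proof.
move=> reg; rewrite blk_sum (sum4 (fun k => #|blk S k|)).
have E := comp_eq (S:=S) isT reg.
apply: c4 => //; try (apply: blk_le; done).
- exact: (E 0 3 1).
- exact: (E 1 0 2).
- exact: (E 2 1 3).
- exact: (E 3 2 0).
Qed.

Definition Q s D c := D %| c /\ (2 * s < D -> c = 0 \/ 2 * D <= c).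

Lemma Q0 s D : Q s D 0.
Proof. by split; [exact: dvdn0 | left]. Qed.

Lemma QD s D a b : Q s D a -> Q s D b -> Q s D (a + b).
Proof.
move=> [da ha] [db hb]; split; first exact: dvdn_add.
move=> h; move: (ha h) (hb h); lia.
Qed.

Lemma Qk s D c k : c = k * D -> k <> 1 \/ D <= 2 * s -> Q s D c.
Proof.
move=> -> hk; split; first exact: dvdn_mull.
move=> h; case: k hk => [|[|k]] hk; lia.
Qed.

Lemma Q9 s D c : c <= 4 * D /\ (c = 0 \/ (c = D /\ D <= 2 * s) \/ c = 2 * D \/ c = 3 * D \/ c = 4 * D) ->
  Q s D c.
Proof.
case=> _ [->|[[-> h]|[->|[->|->]]]].
- exact: Q0.
- by apply: (Qk (k:=1)); [rewrite mul1n | right].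
- by apply: (Qk (k:=2)); [|left].
- by apply: (Qk (k:=3)); [|left].
- by apply: (Qk (k:=4)); [|left].
Qed.

Lemma Q2 s D c : c <= 2 * D /\ (c = 0 \/ (c = D /\ D <= 2 * s) \/ c = 2 * D) -> Q s D c.
Proof.
case=> _ [->|[[-> h]|->]].
- exact: Q0.
- by apply: (Qk (k:=1)); [rewrite mul1n | right].
- by apply: (Qk (k:=2)); [|left].
Qed.

Lemma finish p s D B : prime p -> 0 < D -> Q s D p -> (D = 1 -> p <= B) -> B < p -> 2 * s < p -> False.
Proof.
move=> pp D0 [dp hp] hB Bp sp.
case/primeP: pp => p1 /(_ D dp) /orP[/eqP D1|/eqP Dp].
- move: (hB D1); lia.
- subst D; move: (hp sp); lia.
Qed.

Lemma sum_Q m s D (F : 'I_m -> nat) : (forall u, Q s D (F u)) -> Q s D (\sum_u F u).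
Proof.
move=> h; apply: (big_ind (Q s D)); [exact: Q0 | exact: QD | move=> u _; exact: h].
Qed.

Lemma sum_le m k (F : 'I_m -> nat) : (forall u, F u <= k) -> \sum_u F u <= m * k.
Proof.
move=> h; apply: (@leq_trans (\sum_(u < m) k)); first by apply: leq_sum => u _; exact: h.
by rewrite sum_nat_const card_ord.
Qed.

Lemma copies9 m s (S : {set 'I_m * ('I_9 * 'I_s)}) d :
  (forall x, x \in S -> #|[set y in S | copies_adj m (CK 9 s) x y]| = d) ->
  Q s d.+1 #|S| /\ #|S| <= m * (4 * d.+1).
Proof.
move=> reg; rewrite card_fst; split.
- apply: sum_Q => u; apply: Q9; apply: comp9; exact: (copies_reg (u:=u) reg).
- apply: sum_le => u; case: (comp9 (copies_reg (u:=u) reg)) => //.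
Qed.

Lemma special p e q K : prime p -> 0 < e -> 3 < q -> p = q * e + K * (3 * e) ->
  p = q + K * 3.
Proof.
move=> pp e0 q3 E.
have ep : e %| p by rewrite E dvdn_add // ?dvdn_mull // dvdn_mulr // dvdn_mull.
case/primeP: pp => p1 /(_ e ep) /orP[/eqP e1|/eqP ep'].
- by subst e; rewrite E !muln1.
- subst e; exfalso; nia.
Qed.

Unset Implicit Arguments.

Theorem theorem7 (p t : nat) :
  prime p -> 5 <= p ->
  [/\ (* (a) *)
      p = 12 * t + 1 ->
        ~ has_induced_regular_of_order (copies_adj (3 * t) (CK 9 (6 * t))) p
        /\ 8 * #|{: 'I_(3 * t) * ('I_9 * 'I_(6 * t))}| = 9 * (p - 1) ^ 2,
      (* (b) *)
      p = 12 * t + 5 ->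
        ~ has_induced_regular_of_order (copies_adj (3 * t + 1) (CK 9 (6 * t + 2))) p
        /\ 8 * #|{: 'I_(3 * t + 1) * ('I_9 * 'I_(6 * t + 2))}| = 9 * (p - 1) ^ 2,
      (* (c) *)
      p = 12 * t + 7 ->
        ~ has_induced_regular_of_order
            (sum_adj (CK 5 (6 * t + 3)) (copies_adj (3 * t + 1) (CK 9 (6 * t + 3)))) p
        /\ 8 * #|{: ('I_5 * 'I_(6 * t + 3)) + ('I_(3 * t + 1) * ('I_9 * 'I_(6 * t + 3)))}|
             = (p - 1) * (9 * p - 7)
    & (* (d) *)
      p = 12 * t + 11 ->
        ~ has_induced_regular_of_order
            (sum_adj (CK 4 (6 * t + 5)) (copies_adj (3 * t + 2) (CK 9 (6 * t + 5)))) p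
        /\ 8 * #|{: ('I_4 * 'I_(6 * t + 5)) + ('I_(3 * t + 2) * ('I_9 * 'I_(6 * t + 5)))}|
             = (p - 1) * (9 * p - 11)].
Proof.
move=> pp p5; split=> hp.
- split; last by rewrite !card_prod !card_ord hp; nia.
  case=> S [cS [d reg]].
  case: (copies9 reg); rewrite cS => QS bd.
  apply: (finish pp _ QS (B := 4 * (3 * t))) => //; lia.
- split; last by rewrite !card_prod !card_ord hp; nia.
  case=> S [cS [d reg]].
  case: (copies9 reg); rewrite cS => QS bd.
  apply: (finish pp _ QS (B := 4 * (3 * t + 1))) => //; lia.
- split; last by rewrite card_sum !card_prod !card_ord hp; nia.
  case=> S [cS [d reg]].
  move: cS; rewrite card_sum2 => cS.
  case: (copies9 (sumr_reg reg)) => QR bd.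
  case: (comp5 (suml_reg reg)) => [h0|h0];
  set z := #|lslice S| in h0 *; set w := #|rslice S| in QR bd *; have {}cS : z + w = p := cS.
  + have QL := Q2 h0.
    have Qp := QD QL QR; rewrite cS in Qp.
    apply: (finish pp _ Qp (B := 2 + 4 * (3 * t + 1))) => //; try lia.
  + have E : d.+1 = 3 * (2 * d.+1 - z) /\ z = 5 * (2 * d.+1 - z) by lia.
    case: QR => dR _.
    have := special (e := 2 * d.+1 - z) (q := 5) (K := w %/ d.+1) pp.
    rewrite -E.1 divnK // => H.
    have : p = 5 + w %/ d.+1 * 3 by apply: H; lia.
    lia.
- split; last by rewrite card_sum !card_prod !card_ord hp; nia.
  case=> S [cS [d reg]].
  move: cS; rewrite card_sum2 => cS.
  case: (copies9 (sumr_reg reg)) => QR bd.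
  case: (comp4 (suml_reg reg)) => [h0|h0];
  set z := #|lslice S| in h0 *; set w := #|rslice S| in QR bd *; have {}cS : z + w = p := cS.
  + have QL := Q2 h0.
    have Qp := QD QL QR; rewrite cS in Qp.
    apply: (finish pp _ Qp (B := 2 + 4 * (3 * t + 2))) => //; try lia.
  + have E : d.+1 = 3 * (z - d.+1) /\ z = 4 * (z - d.+1) by lia.
    case: QR => dR _.
    have := special (e := z - d.+1) (q := 4) (K := w %/ d.+1) pp.
    rewrite -E.1 divnK // => H.
    have : p = 4 + w %/ d.+1 * 3 by apply: H; lia.
    lia.
Qed.
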